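(* Let $m\ge2$ and let $k\ge2$ divide $m$. Consider $n=m$ voters and alternatives $a_1,\dots,a_m$, where voter $i$ ranks $a_i$ first. For every partition of the voters into $k$ districts of $m/k$ voters each, there exist a unit-sum valuation profile consistent with these first choices and a resolution of ties such that, in the resulting district-based election with Plurality Voting in each district and unit weights, the election winner $x$ satisfies $\max_j\mathrm{SW}(j\mid\mathbf v)/\mathrm{SW}(x\mid\mathbf v)\ge1+\frac{m^2}{2}$. In particular, there are instances in which every symmetric $k$-districting yields distributed distortion $\Omega(m^2)$ for Plurality Voting.
   Context: Valuations satisfy $v_{ij}\ge0$, $\sum_j v_{ij}=1$; a voter's ranking is induced by her valuations with ties among equal values broken arbitrarily, and ''consistent with first choices'' means voter $i$'s induced ranking (under some tie-breaking) has $a_i$ first. $\mathrm{SW}(j\mid\mathbf v)=\sum_i v_{ij}$. Plurality Voting in a district elects an alternative ranked first by the most voters of the district (ties arbitrary); the election winner is an alternative that is the local winner in the maximum number of districts (ties arbitrary). *)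

(* Defs.v *)
From HB Require Import structures.
From mathcomp Require Import all_boot all_order all_algebra.
Set Implicit Arguments. Unset Strict Implicit. Unset Printing Implicit Defensive.
Import Order.TTheory GRing.Theory Num.Theory.
Local Open Scope ring_scope.

(* n voters ('I_n), m alternatives ('I_m), k districts ('I_k).
   A valuation profile is v : 'I_n -> 'I_m -> R, v i j = v_{ij}. *)

Definition unit_sum_profile (R : realFieldType) (n m : nat)
  (v : 'I_n -> 'I_m -> R) : Prop :=
  (forall i j, 0 <= v i j) /\ (forall i, \sum_(j < m) v i j = 1).

(* voter i's first choice is top i, and her valuations are consistent with it:
   top i has maximal value, so some tie-breaking of the induced ranking puts it first *)
Definition consistent_first (R : realFieldType) (n m : nat)
  (v : 'I_n -> 'I_m -> R) (top : 'I_n -> 'I_m) : Prop :=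
  forall i j, v i j <= v i (top i).

Definition SW (R : realFieldType) (n m : nat) (v : 'I_n -> 'I_m -> R)
  (j : 'I_m) : R := \sum_(i < n) v i j.

Definition plurality_score (n m k : nat) (d : 'I_n -> 'I_k)
  (top : 'I_n -> 'I_m) (t : 'I_k) (j : 'I_m) : nat :=
  #|[set i : 'I_n | (d i == t) && (top i == j)]|.

Definition plurality_local_winner (n m k : nat) (d : 'I_n -> 'I_k)
  (top : 'I_n -> 'I_m) (t : 'I_k) (j : 'I_m) : Prop :=
  forall j' : 'I_m, (plurality_score d top t j' <= plurality_score d top t j)%N.

(* number of districts won by x, given the local winners w (unit weights) *)
Definition districts_won (m k : nat) (w : 'I_k -> 'I_m) (x : 'I_m) : nat :=
  #|[set t : 'I_k | w t == x]|.

Definition election_winner (m k : nat) (w : 'I_k -> 'I_m) (x : 'I_m) : Prop :=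
  forall y : 'I_m, (districts_won w y <= districts_won w x)%N.

Definition symmetric_districting (n k : nat) (d : 'I_n -> 'I_k) : Prop :=
  forall t : 'I_k, #|[set i : 'I_n | d i == t]| = (n %/ k)%N.

(* Main.v *)
Require Import Defs.
From HB Require Import structures.
From mathcomp Require Import all_boot all_order all_algebra.
From mathcomp Require Import ring lra.
Import Order.TTheory GRing.Theory Num.Theory.
Local Open Scope ring_scope.

Section H.
Variable R : realFieldType.

Lemma sum_eq1 n (i : 'I_n) : \sum_(a < n) ((a == i)%:R : R) = 1.
Proof. by rewrite (bigD1 i) //= eqxx big1 ?addr0 // => a /negbTE ->. Qed.

Lemma sum_eq1' n (i : 'I_n) : \sum_(a < n) ((i == a)%:R : R) = 1.
Proof. by rewrite (bigD1 i) //= eqxx big1 ?addr0 // => a; rewrite eq_sym => /negbTE ->. Qed.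

Lemma sum_but n (x : 'I_n) (g : 'I_n -> R) :
  \sum_(i | i != x) g i = \sum_i g i - g x.
Proof. by rewrite [in RHS](bigD1 x) //= addrC addrK. Qed.

Definition vv (n : nat) (x j : 'I_n) (i a : 'I_n) : R :=
  if i == x then (n%:R)^-1 else (((a == i)%:R + (a == j)%:R) / 2%:R).
Arguments vv {n}.

Lemma vv_unit n (x j : 'I_n) : (0 < n)%N -> unit_sum_profile (vv x j).
Proof.
move=> n0; split.
  move=> i a; rewrite /vv; case: (i == x); first by rewrite invr_ge0 ler0n.
  by case: (a == i); case: (a == j) => /=; lra.
move=> i; rewrite /vv; case: (i == x).
  rewrite sumr_const card_ord -[_ *+ n]mulr_natr mulVf //.
  by rewrite pnatr_eq0 -lt0n.
rewrite -mulr_suml big_split /= sum_eq1 sum_eq1; lra.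
Qed.

Lemma vv_cons n (x j : 'I_n) : consistent_first (vv x j) id.
Proof.
move=> i a; rewrite /vv /=; case: (i == x) => //.
rewrite eqxx; case: (eqVneq a i) => [->|ai] //.
by case: (a == j); case: (i == j) => /=; lra.
Qed.

Lemma SWx n (x j : 'I_n) : j != x -> SW (vv x j) x = (n%:R)^-1.
Proof.
move=> jx; rewrite /SW (bigD1 x) //= big1 ?addr0; first by rewrite /vv eqxx.
move=> i ix; rewrite /vv (negbTE ix) eq_sym (negbTE ix) eq_sym (negbTE jx) /=; lra.
Qed.

Lemma SWj n (x j : 'I_n) : j != x -> SW (vv x j) j = (n%:R)^-1 + n%:R / 2%:R.
Proof.
move=> jx; rewrite /SW (bigD1 x) //= {1}/vv eqxx; congr (_ + _).
rewrite (eq_bigr (fun i => ((j == i)%:R + 1) / 2%:R)); last first.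
  by move=> i ix; rewrite /vv (negbTE ix) eqxx.
rewrite sum_but -mulr_suml big_split /= sum_eq1' sumr_const card_ord (negbTE jx).
rewrite /=; lra.
Qed.

End H.

Theorem theorem9 (R : realFieldType) (m k : nat) :
  (2 <= m)%N -> (2 <= k)%N -> (k %| m)%N ->
  forall d : 'I_m -> 'I_k, symmetric_districting d ->
  exists v : 'I_m -> 'I_m -> R,
    [/\ unit_sum_profile v, consistent_first v id &
    exists w : 'I_k -> 'I_m,
      (forall t, plurality_local_winner d id t (w t)) /\
      exists x : 'I_m, election_winner w x /\
        exists j : 'I_m, 1 + (m%:R ^+ 2) / 2%:R <= SW v j / SW v x].
Proof.
case: m => [|[|m]] // _; case: k => [|[|k]] // _ km d hd.
set w := fun t : 'I_k.+2 => odflt ord0 [pick i | d i == t].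
have hw : forall t, d (w t) = t.
  move=> t; rewrite /w; case: pickP => [i /eqP //|H].
  have := hd t; rewrite (_ : [set i | d i == t] = set0) ?cards0.
    have : (0 < m.+2 %/ k.+2)%N by rewrite divn_gt0 // dvdn_leq.
    by move=> + E; rewrite -E.
  by apply/setP => i; rewrite !inE H.
set x := w ord0.
set j : 'I_m.+2 := if x == ord0 then ord_max else ord0.
have jx : j != x.
  rewrite /j; case: (eqVneq x ord0) => [E|ne].
    by rewrite E; apply/eqP => /(congr1 val).
  by rewrite eq_sym.
exists (@vv R _ x j); split; [exact: vv_unit | exact: vv_cons |].
exists w; split.
  move=> t j'; rewrite /plurality_score.
  apply: (@leq_trans 1).
    rewrite -(cards1 j'); apply: subset_leq_card.
    by apply/subsetP => i; rewrite !inE => /andP [_ ->].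
  rewrite card_gt0; apply/set0Pn; exists (w t); rewrite !inE hw !eqxx.
  by [].
exists x; split.
  move=> y; rewrite /districts_won; apply: (@leq_trans 1).
    rewrite -(cards1 (d y)); apply: subset_leq_card.
    by apply/subsetP => t; rewrite !inE => /eqP <-; rewrite hw.
  by rewrite card_gt0; apply/set0Pn; exists ord0; rewrite !inE.
exists j; rewrite SWj // SWx //.
have h : (m.+2%:R : R) != 0 by rewrite pnatr_eq0.
rewrite le_eqVlt; apply/orP; left; apply/eqP; field.
apply: lt0r_neq0; have := ler0n R m; lra.
Qed.
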